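(* Let $N$ be a positive integer and $A$ an $N$-complementable flat layout. If $B$ is a flat layout that is an $N$-complement of $A$, is coalesced, and is sorted, then $B=\mathrm{comp}^\flat(A,N)$.
   Context: A flat layout $L=(s_1,\dots,s_m):(d_1,\dots,d_m)$ has positive integer shape entries and nonnegative integer stride entries, modes $s_i:d_i$; $\mathrm{size}(L)=\prod s_i$, $\mathrm{cosize}(L)=1+\sum(s_i-1)d_i$; layout function $\Phi_L(x)=\sum x_id_i$, $x_i=\lfloor x/(s_1\cdots s_{i-1})\rfloor\bmod s_i$, on $[0,\mathrm{size}(L))$. $L$ is compact if $\Phi_L:[0,\mathrm{size}(L))\to[0,\mathrm{cosize}(L))$ is bijective. $A\star B$ is concatenation of shapes and of strides; $B$ is an $N$-complement of $A$ if $A\star B$ is compact and $\mathrm{size}(A)\mathrm{size}(B)=N$. $L$ is coalesced if no $s_i=1$ and $s_id_i\ne d_{i+1}$ for $1\le i<m$. Order pairs by $s:d\preceq s':d'$ iff $d<d'$ or ($d=d'$ and $s\le s'$); $L$ is sorted if its modes are $\preceq$-nondecreasing, and $\mathrm{sort}(L)$ stably reorders the modes into this order. $\mathrm{squeeze}(L)$ removes modes with $s_i=1$; $\mathrm{coal}^\flat(L)$ is obtained from $\mathrm{squeeze}(L)$ by repeatedly replacing adjacent modes $s_i,s_{i+1}:d_i,d_{i+1}$ with $d_{i+1}=s_id_i$ by $s_is_{i+1}:d_i$. $A$ is $N$-complementable if, writing $\mathrm{sort}(\mathrm{squeeze}(A))=(s_1,\dots,s_m):(d_1,\dots,d_m)$,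 $s_id_i\mid d_{i+1}$ for $1\le i<m$ and $s_md_m\mid N$; then $\mathrm{comp}^\flat(A,N)=\mathrm{coal}^\flat(C)$ with $C=\bigl(d_1,\tfrac{d_2}{s_1d_1},\tfrac{d_3}{s_2d_2},\dots,\tfrac{N}{s_md_m}\bigr):(1,s_1d_1,s_2d_2,\dots,s_md_m)$. *)

(* Defs.v *)
From mathcomp Require Import all_boot.
Set Implicit Arguments. Unset Strict Implicit. Unset Printing Implicit Defensive.

(* A mode s:d is a pair (s, d) : nat * nat (shape, stride); a flat layout is the
   sequence of its modes (s_1:d_1, ..., s_m:d_m). *)
Definition mode := (nat * nat)%type.
Definition layout := seq mode.

Definition shp (L : layout) (i : nat) : nat := (nth (1, 0) L i).1.
Definition strd (L : layout) (i : nat) : nat := (nth (1, 0) L i).2.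

Definition flat_layout (L : layout) : Prop := forall i, i < size L -> 0 < shp L i.

Definition lsize (L : layout) : nat := \prod_(i < size L) shp L i.
Definition cosize (L : layout) : nat :=
  1 + \sum_(i < size L) (shp L i - 1) * strd L i.

Definition Phi (L : layout) (x : nat) : nat :=
  \sum_(i < size L) ((x %/ \prod_(j < i) shp L j) %% shp L i) * strd L i.

Definition compact (L : layout) : Prop :=
  [/\ forall x, x < lsize L -> Phi L x < cosize L,
      forall x y, x < lsize L -> y < lsize L -> Phi L x = Phi L y -> x = y
    & forall z, z < cosize L -> exists2 x, x < lsize L & Phi L x = z].

Definition concat (A B : layout) : layout := A ++ B.

Definition is_complement (N : nat) (A B : layout) : Prop :=
  compact (concat A B) /\ lsize A * lsize B = N.

Definition coalesced (L : layout) : Prop :=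
  (forall i, i < size L -> shp L i != 1) /\
  (forall i, i.+1 < size L -> shp L i * strd L i != strd L i.+1).

Definition mode_le (p q : mode) : bool :=
  (p.2 < q.2) || ((p.2 == q.2) && (p.1 <= q.1)).

Definition sorted_layout (L : layout) : bool := sorted mode_le L.

(* stable sort (mathcomp's path.sort is a stable merge sort) *)
Definition sort_layout (L : layout) : layout := sort mode_le L.

Definition squeeze (L : layout) : layout := filter (fun m => m.1 != 1) L.

(* coal^flat: merges adjacent modes s_i:d_i, s_{i+1}:d_{i+1} with
   d_{i+1} = s_i d_i into s_i s_{i+1} : d_i until no such pair remains;
   computed here right-to-left (the result is a normal form of that rewriting). *)
Fixpoint coal_aux (L : layout) : layout :=
  match L with
  | [::] => [::]
  | m :: L' =>
      match coal_aux L' with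
      | m' :: L'' =>
          if m'.2 == m.1 * m.2 then (m.1 * m'.1, m.2) :: L''
          else m :: m' :: L''
      | [::] => [:: m]
      end
  end.

Definition coal_flat (L : layout) : layout := coal_aux (squeeze L).

Definition complementable (A : layout) (N : nat) : Prop :=
  let S := sort_layout (squeeze A) in
  (forall i, i.+1 < size S -> shp S i * strd S i %| strd S i.+1) /\
  (0 < size S -> shp S (size S).-1 * strd S (size S).-1 %| N).

(* C = (d_1, d_2/(s_1 d_1), ..., N/(s_m d_m)) : (1, s_1 d_1, ..., s_m d_m) *)
Definition comp_C (A : layout) (N : nat) : layout :=
  let S := sort_layout (squeeze A) in
  let strides := 1 :: [seq m.1 * m.2 | m <- S] in
  let nums := [seq m.2 | m <- S] ++ [:: N] in
  [seq (p.1 %/ p.2, p.2) | p <- zip nums strides].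

Definition comp_flat (A : layout) (N : nat) : layout := coal_flat (comp_C A N).

(* Main.v *)
Require Import Defs.
From mathcomp Require Import all_boot zify.
Set Implicit Arguments. Unset Strict Implicit. Unset Printing Implicit Defensive.

Definition sp (m : mode) (X : seq nat) : seq nat := [seq a * m.2 + v | v <- X, a <- iota 0 m.1].
Fixpoint img (L : layout) : seq nat := if L is m :: L' then sp m (img L') else [:: 0].

Lemma perm_allpairs_swap (T1 T2 : Type) (R : eqType) (f : T1 -> T2 -> R) s t :
  perm_eq [seq f x y | x <- s, y <- t] [seq f x y | y <- t, x <- s].
Proof.
elim: s => [|x s IH]; first by elim: t.
rewrite perm_sym (perm_allpairs_consr (fun y x => f x y)) /= perm_cat2l perm_sym.
exact: IH.
Qed.

Lemma sp_cat m X Y : sp m (X ++ Y) = sp m X ++ sp m Y.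
Proof. by rewrite /sp /= map_cat flatten_cat. Qed.

Lemma sp_perm m X Y : perm_eq X Y -> perm_eq (sp m X) (sp m Y).
Proof. by move=> h; apply: perm_allpairs. Qed.

Lemma sp_swap m1 m2 X : perm_eq (sp m1 (sp m2 X)) (sp m2 (sp m1 X)).
Proof.
elim: X => [|v X IH] //=.
rewrite -cat1s !sp_cat; apply: perm_cat => //.
rewrite /sp /= !cats0.
set f := fun a1 a2 => a1 * m1.2 + (a2 * m2.2 + v).
have -> : [seq a * m1.2 + v0 | v0 <- [seq a * m2.2 + v | a <- iota 0 m2.1], a <- iota 0 m1.1]
  = [seq f x y | y <- iota 0 m2.1, x <- iota 0 m1.1].
  by rewrite /f; elim: (iota 0 m2.1) => //= a l ->.
have -> : [seq a * m2.2 + v0 | v0 <- [seq a * m1.2 + v | a <- iota 0 m1.1], a <- iota 0 m2.1]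
  = [seq f x y | x <- iota 0 m1.1, y <- iota 0 m2.1].
  rewrite /f; elim: (iota 0 m1.1) => //= a l ->; congr (_ ++ _).
  by apply: eq_map => y; rewrite addnCA.
by rewrite perm_sym perm_allpairs_swap.
Qed.

Lemma img_move L1 m L2 : perm_eq (img (L1 ++ m :: L2)) (img (m :: L1 ++ L2)).
Proof.
elim: L1 => [|x L1 IH] //=.
apply: perm_trans (sp_perm x IH) _; exact: sp_swap.
Qed.

Lemma img_perm L1 L2 : perm_eq L1 L2 -> perm_eq (img L1) (img L2).
Proof.
elim: L1 L2 => [|m L1 IH] L2 h.
  by move: h; rewrite perm_sym => /perm_nilP ->.
have : m \in L2 by rewrite -(perm_mem h) mem_head.
move=> hm; move: h; case/splitPr: hm => P1 P2 h.
rewrite perm_sym; apply: perm_trans (img_move P1 m P2) _; rewrite perm_sym /=.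
apply: sp_perm; apply: IH.
by rewrite -(perm_cons m); apply: perm_trans h _; rewrite (perm_catCA P1 [:: m] P2).
Qed.
Lemma lsize_cons m L : lsize (m :: L) = m.1 * lsize L.
Proof. by rewrite /lsize big_ord_recl. Qed.

Lemma prod_shp_cons m L i : \prod_(j < i.+1) shp (m :: L) j = m.1 * \prod_(j < i) shp L j.
Proof. by rewrite big_ord_recl. Qed.

Lemma Phi_cons m L x : Phi (m :: L) x = (x %% m.1) * m.2 + Phi L (x %/ m.1).
Proof.
rewrite /Phi big_ord_recl big_ord0 divn1 /=; congr (_ + _).
apply: eq_bigr => i _; rewrite /bump /= add1n prod_shp_cons divnMA.
by [].
Qed.

Lemma iota_split n s : iota 0 (n * s) = flatten [seq [seq y * s + a | a <- iota 0 s] | y <- iota 0 n].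
Proof.
elim: n => [|n IH] //.
rewrite mulSnr iotaD IH -addn1 iotaD map_cat flatten_cat /= cats0 add0n.
congr (_ ++ _); rewrite -[n * s]addn0 iotaDl; apply: eq_map => a /=; lia.
Qed.

Lemma map_Phi L : [seq Phi L x | x <- iota 0 (lsize L)] = img L.
Proof.
elim: L => [|m L IH].
  by rewrite /lsize /Phi /= big_ord0 /= big_ord0.
rewrite lsize_cons mulnC iota_split map_flatten /= -IH /sp.
rewrite /allpairs_dep -map_comp /=.
congr flatten; rewrite -[RHS]map_comp; apply/eq_in_map => y _ /=.
rewrite -map_comp; apply/eq_in_map => a; rewrite mem_iota add0n => /andP[_ ha] /=.
have hs : 0 < m.1 by case: (m.1) ha.
by rewrite Phi_cons modnMDl modn_small // divnMDl // divn_small // addn0.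
Qed.
Lemma helper a b s k q : 0 < b -> a < s -> a*b + k*(s*b) = q*(s*b) -> a = 0 /\ k = q.
Proof.
move=> hb hs e.
have hab : a * b < s * b by rewrite ltn_pmul2r.
set c := s * b in hab e *.
have hk : k = q.
  case: (ltngtP k q) => // h.
  - have : k.+1 * c <= q * c by rewrite leq_mul2r h orbT.
    rewrite mulSn; lia.
  - have : q.+1 * c <= k * c by rewrite leq_mul2r h orbT.
    rewrite mulSn; lia.
split=> //; subst k.
have : a * b = 0 by lia.
by move/eqP; rewrite muln_eq0 => /orP[/eqP//|/eqP hb0]; rewrite hb0 in hb.
Qed.

Lemma mem_sp m X x : reflect (exists v a, [/\ v \in X, a < m.1 & x = a * m.2 + v]) (x \in sp m X).
Proof.
apply: (iffP allpairsP) => [[[v a] [/= hv ha ->]]|[v [a [hv ha ->]]]].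
  by exists v, a; split => //; move: ha; rewrite mem_iota.
by exists (v, a); split => //=; rewrite mem_iota.
Qed.

Lemma sp_f m X v a : v \in X -> a < m.1 -> a * m.2 + v \in sp m X.
Proof. by move=> hv ha; apply/mem_sp; exists v, a. Qed.

Lemma sp_uniq_inj m X v1 v2 a1 a2 : uniq (sp m X) -> v1 \in X -> v2 \in X ->
  a1 < m.1 -> a2 < m.1 -> a1 * m.2 + v1 = a2 * m.2 + v2 -> v1 = v2.
Proof.
elim: X => [|v X IH] //= hu.
have hcat : sp m (v :: X) = [seq a * m.2 + v | a <- iota 0 m.1] ++ sp m X by [].
move: hu; rewrite hcat cat_uniq => /and3P[_ hn hu].
have key : forall a1 a2 v2, v2 \in X -> a1 < m.1 -> a2 < m.1 -> a1 * m.2 + v = a2 * m.2 + v2 -> False.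
  move=> b1 b2 w hw hb1 hb2 e.
  move/hasP: hn; apply; exists (b2 * m.2 + w); first exact: sp_f.
  by rewrite -e; apply/mapP; exists b1; rewrite ?mem_iota.
rewrite !inE => /predU1P[->|h1] /predU1P[->|h2] ha1 ha2 e //.
- by case: (key _ _ _ h2 ha1 ha2 e).
- by case: (key _ _ _ h1 ha2 ha1 (esym e)).
- exact: IH e.
Qed.

Lemma sp_uniqX m X : 0 < m.1 -> uniq (sp m X) -> uniq X.
Proof.
move=> hs; elim: X => [|v X IH] //= hu.
have hcat : sp m (v :: X) = [seq a * m.2 + v | a <- iota 0 m.1] ++ sp m X by [].
move: hu; rewrite hcat cat_uniq => /and3P[_ hn hu].
rewrite IH // andbT; apply/negP => hv.
move/hasP: hn; apply; exists (0 * m.2 + v); first exact: sp_f.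
by apply/mapP; exists 0; rewrite ?mem_iota.
Qed.

Lemma size_sp m X : size (sp m X) = size X * m.1.
Proof. by rewrite /sp size_allpairs size_iota. Qed.

Lemma mem_mulseq b n x : 0 < b -> (x \in [seq b * j | j <- iota 0 n]) = (b %| x) && (x %/ b < n).
Proof.
move=> hb; apply/mapP/andP => [[j]|[/dvdnP[j ->]]].
  by rewrite mem_iota => /andP[_ hj] ->; rewrite dvdn_mulr // mulKn.
by rewrite mulnK // => hj; exists j; rewrite ?mem_iota // mulnC.
Qed.

Lemma mulnI_pos b : 0 < b -> injective (muln b).
Proof. by move=> hb x y /eqP; rewrite eqn_pmul2l // => /eqP.  Qed.

Lemma peel b s W n : 0 < b -> 0 < s ->
  perm_eq (sp (s, b) W) [seq b * j | j <- iota 0 n] ->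
  perm_eq W [seq (s * b) * j | j <- iota 0 (n %/ s)].
Proof.
move=> hb hs hP.
have uP : uniq (sp (s, b) W).
  by rewrite (perm_uniq hP) map_inj_uniq ?iota_uniq //; exact: mulnI_pos.
have memP x : (x \in sp (s, b) W) = (b %| x) && (x %/ b < n).
  by rewrite (perm_mem hP) mem_mulseq.
have hn : n = size W * s.
  by rewrite -(size_sp (s, b)) (perm_size hP) size_map size_iota.
have hsb : 0 < s * b by rewrite muln_gt0 hs hb.
have mult : forall w, w \in W -> (s * b) %| w.
  elim/ltn_ind => w IHw hw.
  have hwP : w \in sp (s, b) W by rewrite -[w]add0n -[0]/(0 * b); apply: sp_f.
  move: (hwP); rewrite memP => /andP[/dvdnP[j hj] hjn].
  rewrite hj mulnK // in hjn.
  case hr : (w %% (s * b) == 0); first by rewrite /dvdn hr.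
  set q := w %/ (s * b); set r := w %% (s * b).
  have hwqr : w = q * (s * b) + r by rewrite /q /r -divn_eq.
  have hrlt : r < s * b by rewrite /r ltn_pmod.
  have hr0 : 0 < r by rewrite lt0n hr.
  have hjq : q * s < j.
    have : q * s * b < j * b by rewrite -mulnA -hj hwqr; lia.
    by rewrite ltn_pmul2r.
  have huP : q * (s * b) \in sp (s, b) W.
    rewrite memP mulnA dvdn_mull // mulnK //; lia.
  case/mem_sp: huP => v [a [hv /= ha e]].
  have hvw : v < w by lia.
  case/dvdnP: (IHw v hvw hv) => k hk.
  rewrite hk in e; case: (helper hb ha (esym e)) => ha0 hkq.
  subst a k.
  have hw2 : w = (j - q * s) * b + v.
    have : q * s * b <= j * b by rewrite leq_mul2r ltnW ?orbT.
    rewrite hk mulnBl {1}hj mulnA; lia.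
  have ha' : j - q * s < s.
    have : (j - q * s) * b < s * b by lia.
    by rewrite ltn_pmul2r.
  have e2 : (j - q * s) * (s, b).2 + v = 0 * (s, b).2 + w by rewrite /= mul0n add0n -hw2.
  have := sp_uniq_inj uP hv hw ha' hs e2.
  lia.
apply: uniq_perm.
- exact: sp_uniqX uP.
- by rewrite map_inj_uniq ?iota_uniq //; exact: mulnI_pos.
move=> x; rewrite mem_mulseq // hn mulnK //; apply/idP/andP => [hx|[/dvdnP[k ->] hk]].
  have hd := mult x hx; split => //.
  case/dvdnP: hd => k hk; rewrite hk mulnK //.
  have : x \in sp (s, b) W by rewrite -[x]add0n -[0]/(0 * b); apply: sp_f.
  rewrite memP hk => /andP[_].
  by rewrite mulnA mulnK // hn ltn_mul2r hs.
rewrite mulnK // in hk.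
have : k * (s * b) \in sp (s, b) W.
  by rewrite memP mulnA dvdn_mull // mulnK // hn ltn_mul2r hs.
case/mem_sp => v [a [hv /= ha e]].
case/dvdnP: (mult v hv) => k' hk'.
rewrite hk' in e; case: (helper hb ha (esym e)) => _ hkk.
by rewrite -hkk -hk'.
Qed.
Fixpoint is_chain (b : nat) (K : layout) (E : nat) : bool :=
  if K is m :: K' then [&& m.2 == b, 1 < m.1 & is_chain (m.1 * m.2) K' E] else b == E.

Lemma zero_in_img L : all (fun m : mode => 0 < m.1) L -> 0 \in img L.
Proof.
elim: L => [|m L IH] /=; first by rewrite inE.
by case/andP => h1 h2; have := sp_f (m := m) (a := 0) (IH h2) h1; rewrite mul0n add0n.
Qed.

Lemma stride_in L m : all (fun m : mode => 0 < m.1) L -> m \in L -> 1 < m.1 -> m.2 \in img L.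
Proof.
elim: L => [|m' L IH] //= /andP[h1 h2]; rewrite inE => /predU1P[->|hm] hs.
  by have := sp_f (m := m') (a := 1) (zero_in_img h2) hs; rewrite mul1n addn0.
by have := sp_f (m := m') (a := 0) (IH h2 hm hs) h1; rewrite mul0n add0n.
Qed.

Lemma pos_elem L v : v \in img L -> 0 < v ->
  exists2 m : mode, m \in L & [&& 0 < m.2, m.2 <= v & 1 < m.1].
Proof.
elim: L v => [|m L IH] v /=; first by rewrite inE => /eqP ->.
case/mem_sp => w [a [hw ha ->]] hv.
case: (posnP (a * m.2)) => h.
  rewrite h add0n in hv; case: (IH w hw hv) => m' hm' /and3P[h1 h2 h3].
  by exists m'; rewrite ?inE ?hm' ?orbT // h1 h3 h add0n h2.
exists m; rewrite ?mem_head //.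
move: h; rewrite muln_gt0 => /andP[ha0 hd]; rewrite hd /=.
apply/andP; split; last by lia.
by apply: leq_trans (leq_addr _ _); rewrite leq_pmull.
Qed.

Lemma size_img_pos L : all (fun m : mode => 0 < m.1) L -> 0 < size (img L).
Proof.
by elim: L => [|m L IH] //= /andP[h1 h2]; rewrite size_sp muln_gt0 IH.
Qed.

Lemma chain_exists k L b n : size L = k -> 0 < b -> all (fun m : mode => 1 < m.1) L ->
  perm_eq (img L) [seq b * j | j <- iota 0 n] ->
  exists2 K, perm_eq L K & is_chain b K (b * n).
Proof.
elim: k L b n => [|k IH] L b n hk hb hall hP.
  case: L hk hall hP => // _ _ hP.
  have := perm_size hP; rewrite size_map size_iota /= => <-.
  by exists [::]; rewrite //= muln1.
have hpos : all (fun m : mode => 0 < m.1) L.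
  by apply: sub_all hall => m /ltnW.
have hn : n = size (img L) by rewrite (perm_size hP) size_map size_iota.
have hL : L != [::] by case: L hk {hall hP hpos hn}.
have hn1 : 1 < n.
  case: L hk hL hall hP hpos hn => // m L _ _ /andP[hm hall] _ /andP[hm0 hpos] ->.
  by rewrite /= size_sp; apply: leq_trans hm _; rewrite leq_pmull ?size_img_pos.
have hbimg : b \in img L by rewrite (perm_mem hP) mem_mulseq // dvdnn divnn hb.
case: (pos_elem hbimg hb) => -[s d] hm /and3P[/= hd0 hdb hs].
have hdimg : d \in img L by apply: (stride_in hpos hm).
move: hdimg; rewrite (perm_mem hP) mem_mulseq // => /andP[hbd _].
have hdb' : d = b by apply/eqP; rewrite eqn_leq hdb dvdn_leq.
subst d.
set L' := rem (s, b) L.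
have hperm : perm_eq L ((s, b) :: L') by apply: perm_to_rem.
have himg : perm_eq (img L) (sp (s, b) (img L')) by apply: (img_perm hperm).
have hP' : perm_eq (sp (s, b) (img L')) [seq b * j | j <- iota 0 n].
  have h1 : perm_eq (sp (s, b) (img L')) (img L) by rewrite perm_sym.
  exact: perm_trans h1 hP.
have hs0 : 0 < s by lia.
have hpeel := peel hb hs0 hP'.
have hsn : n = size (img L') * s by rewrite hn (perm_size himg) size_sp.
have hk' : size L' = k by move: (perm_size hperm); rewrite hk /= => [[]].
have hall' : all (fun m : mode => 1 < m.1) L'.
  by apply/allP => m hm'; apply: (allP hall); rewrite (perm_mem hperm) inE hm' orbT.
have hsb : 0 < s * b by rewrite muln_gt0 hs0 hb.
have [K hK1 hK2] := IH L' (s * b) (n %/ s) hk' hsb hall' hpeel.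
exists ((s, b) :: K).
  by apply: perm_trans hperm _; rewrite perm_cons.
rewrite /= eqxx hs /=.
have e : b * n = s * b * (n %/ s).
  by rewrite hsn mulnK // [size _ * s]mulnC mulnA [b * s]mulnC.
by rewrite e.
Qed.

Definition ltm (p q : mode) : bool := p.2 < q.2.
Definition noadj (x y : mode) : bool := y.2 != x.1 * x.2.

Lemma ltm_trans : transitive ltm.
Proof. by move=> y x z; rewrite /ltm; apply: ltn_trans. Qed.
Lemma ltm_irr : irreflexive ltm.
Proof. by move=> x; rewrite /ltm ltnn. Qed.

Fixpoint gaps (b : nat) (S : layout) (E : nat) : layout :=
  match S with
  | [::] => if E %/ b == 1 then [::] else [:: (E %/ b, b)]
  | m :: S' => (if m.2 %/ b == 1 then [::] else [:: (m.2 %/ b, b)]) ++ gaps (m.1 * m.2) S' E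
  end.

Lemma chain_sorted b K E : 0 < b -> is_chain b K E -> all (fun m : mode => b <= m.2) K && sorted ltm K.
Proof.
elim: K b => [|[s d] K IH] b //= hb /and3P[/eqP -> hs hK].
have hsb : 0 < s * b by rewrite muln_gt0 hb; lia.
case/andP: (IH _ hsb hK) => hall hsort.
rewrite leqnn /=.
have hall' : all (ltm (s, b)) K.
  by apply: sub_all hall => m /= h; rewrite /ltm /=; apply: leq_trans h; rewrite ltn_Pmull.
rewrite (path_min_sorted hall') hsort andbT.
by apply: sub_all hall' => m; rewrite /ltm /= => /ltnW.
Qed.

Lemma gaps_chain K b E (P : pred mode) : 0 < b -> is_chain b K E ->
  sorted noadj [seq x <- K | ~~ P x] -> [seq x <- K | ~~ P x] = gaps b [seq x <- K | P x] E.
Proof.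
elim: K b => [|[t d] K IH] b hb /=.
  by move=> /eqP <- _; rewrite divnn hb.
case/and3P => /eqP hd ht hK; subst d.
have htb : 0 < t * b by rewrite muln_gt0 hb; lia.
case: (P (t, b)) => /= hs.
  by rewrite divnn hb /=; apply: IH.
have hs' : sorted noadj [seq x <- K | ~~ P x] by apply: path_sorted hs.
rewrite (IH _ htb hK hs').
case: K IH hK hs hs' => [|[t2 d2] K] IH /=.
  by move=> /eqP <- _ _; rewrite mulnK // divnn htb /=; case: eqP => // ht1; rewrite ht1 in ht.
case/and3P => /eqP hd2 ht2 hK; subst d2.
case: (P (t2, t * b)) => /=.
  by move=> _ _; rewrite divnn htb /= mulnK //; case: eqP => // ht1; rewrite ht1 in ht.
by rewrite /noadj /= eqxx.
Qed.

Lemma gaps_comp S b N :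
  squeeze [seq (p.1 %/ p.2, p.2) | p <- zip ([seq m.2 | m <- S] ++ [:: N]) (b :: [seq m.1 * m.2 | m <- S])]
  = gaps b S N.
Proof.
elim: S b => [|m S IH] b /=; first by case: eqP.
by rewrite /squeeze /= -/(squeeze _) IH; case: eqP.
Qed.

Lemma coal_id X : sorted noadj X -> coal_aux X = X.
Proof.
elim: X => [|m X IH] //= hp.
rewrite IH ?(path_sorted hp) //.
by case: X hp {IH} => [|m' X] //= /andP[/negbTE ->].
Qed.

Lemma sp1 m X : m.1 = 1 -> sp m X = X.
Proof. by move=> h; rewrite /sp h; elim: X => //= v X ->; rewrite mul0n add0n. Qed.

Lemma img_squeeze L : img (squeeze L) = img L.
Proof.
elim: L => [|m L IH] //=; rewrite /squeeze /=; case: eqP => h /=.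
  by rewrite sp1 // -IH.
by rewrite -/(squeeze L) IH.
Qed.

Lemma lsize_cat L1 L2 : lsize (L1 ++ L2) = lsize L1 * lsize L2.
Proof.
elim: L1 => [|m L1 IH] /=; first by rewrite /lsize big_ord0 mul1n.
by rewrite !lsize_cons IH mulnA.
Qed.

Lemma le_to_lt X : sorted mode_le X -> uniq [seq m.2 | m <- X] -> sorted ltm X.
Proof.
case: X => [|x X] //=; elim: X x => [|y X IH] x //= /andP[hxy hp].
rewrite inE negb_or => /andP[/andP[hne _] hu].
rewrite IH // andbT.
by move: hxy hne; rewrite /mode_le /ltm; case: ltngtP.
Qed.

Lemma mode_le_total : total mode_le.
Proof. by move=> x y; rewrite /mode_le; case: ltngtP => //= _; apply: leq_total. Qed.

Theorem mainTheorem15 (N : nat) (A B : layout) :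
  0 < N -> flat_layout A -> complementable A N ->
  flat_layout B -> is_complement N A B -> coalesced B -> sorted_layout B ->
  B = comp_flat A N.
Proof.
move=> hN hA _ hB [hc hsz] [hB1 hB2] hsort.
set S := sort_layout (squeeze A).
have hApos : all (fun m : mode => 0 < m.1) A.
  by apply/(all_nthP (1, 0)) => i hi; apply: hA.
have hBpos : all (fun m : mode => 0 < m.1) B.
  by apply/(all_nthP (1, 0)) => i hi; apply: hB.
have hBne : all (fun m : mode => m.1 != 1) B.
  by apply/(all_nthP (1, 0)) => i hi; apply: hB1.
have hBsq : squeeze B = B by apply/all_filterP.
have hL : all (fun m : mode => 1 < m.1) (squeeze A ++ B).
  rewrite all_cat; apply/andP; split.
    apply/allP => m; rewrite mem_filter => /andP[/= h1 h2].
    by have /= := allP hApos m h2; lia.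
  apply/allP => m hm; have /= := allP hBpos m hm; have /= := allP hBne m hm; lia.
have himgAB : img (squeeze A ++ B) = img (A ++ B).
  by rewrite -[RHS]img_squeeze /squeeze filter_cat -/(squeeze B) hBsq.
case: hc => hc1 hc2 hc3.
have hperm0 : perm_eq (img (A ++ B)) (iota 0 (cosize (A ++ B))).
  rewrite -map_Phi; apply: uniq_perm; rewrite ?iota_uniq //.
    rewrite map_inj_in_uniq ?iota_uniq // => x y; rewrite !mem_iota !add0n /=.
    by move=> hx hy; apply: hc2.
  move=> z; rewrite mem_iota add0n /=; apply/mapP/idP => [[x]|hz].
    by rewrite mem_iota add0n => /andP[_ hx] ->; apply: hc1.
  by case: (hc3 z hz) => x hx <-; exists x; rewrite // mem_iota.
have hcos : cosize (A ++ B) = N.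
  by have := perm_size hperm0; rewrite size_iota -map_Phi size_map size_iota lsize_cat hsz => ->.
rewrite hcos in hperm0.
have hperm1 : perm_eq (img (squeeze A ++ B)) [seq 1 * j | j <- iota 0 N].
  by rewrite himgAB (eq_map mul1n) map_id.
have [K hK1 hK2] := chain_exists erefl (ltn0Sn 0) hL hperm1.
rewrite mul1n in hK2.
have /andP[_ hKs] := chain_sorted (ltn0Sn 0) hK2.
have hKu : uniq [seq m.2 | m <- K].
  apply: (sorted_uniq ltn_trans ltnn).
  by rewrite sorted_map.
have hSp : perm_eq S (squeeze A) by rewrite /S /sort_layout perm_sort.
have hSB : perm_eq (S ++ B) K.
  by apply: perm_trans hK1; rewrite perm_cat2r.
have hu : uniq [seq m.2 | m <- S ++ B] by rewrite (perm_uniq (perm_map _ hSB)).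
have hu' := hu; rewrite map_cat cat_uniq in hu'; case/and3P: hu' => huS _ huB.
have hSs : sorted ltm S.
  apply: le_to_lt huS; rewrite /S /sort_layout. exact: (sort_sorted mode_le_total).
have hBs : sorted ltm B by apply: le_to_lt huB.
have hUSB : uniq (S ++ B) by apply: map_uniq hu.
have hmemK x : (x \in K) = (x \in S ++ B) by rewrite (perm_mem hSB).
have hS_eq : S = [seq x <- K | x \in S].
  apply: (irr_sorted_eq ltm_trans ltm_irr hSs (sorted_filter ltm_trans _ hKs)).
  by move=> x; rewrite mem_filter hmemK mem_cat; case: (x \in S).
have hB_eq : B = [seq x <- K | x \notin S].
  rewrite -(@eq_in_filter _ (fun x => x \in B)).
    apply: (irr_sorted_eq ltm_trans ltm_irr hBs (sorted_filter ltm_trans _ hKs)).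
    by move=> x; rewrite mem_filter hmemK mem_cat; case: (x \in B); rewrite ?orbT.
  move=> x; rewrite hmemK mem_cat; move: hUSB; rewrite cat_uniq => /and3P[_ hn _].
  case/orP => hx.
    by rewrite hx /=; apply/negP => hxB; move/hasP: hn; apply; exists x.
  by rewrite hx; apply/esym/negP => hxS; move/hasP: hn; apply; exists x.
have hBna : sorted noadj B.
  apply/(sortedP (1, 0)) => i hi; rewrite /noadj eq_sym; exact: hB2.
have hBg : B = gaps 1 S N.
  rewrite hB_eq {2}hS_eq; apply: gaps_chain => //; by rewrite -hB_eq.
rewrite /comp_flat /coal_flat /comp_C -/S gaps_comp -hBg coal_id //.
Qed.
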